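(* Let $\mathcal G$ be a tree on $n\ge2$ nodes, with oriented incidence matrix $D_\tau\in\mathbb R^{n\times(n-1)}$, edge-weight matrix $W=\mathrm{diag}(w_1,\dots,w_{n-1})$, $w_l>0$, and time-scale matrix $E=\mathrm{diag}(\epsilon_1,\dots,\epsilon_n)$, $\epsilon_i>0$; let $L_{e,s}^\tau=D_\tau^TE^{-1}D_\tau$ and $\sigma_w,\sigma_v$ real scalars. Consider $$\tilde\Sigma_\tau(s)=\big(sI+L_{e,s}^\tau W\big)^{-1}\begin{bmatrix}\sigma_wD_\tau^TE^{-1/2} & -\sigma_vL_{e,s}^\tau W^{1/2}\end{bmatrix}.$$ Then $L\le\|\tilde\Sigma_\tau\|_\infty^2\le U$, where $L=\max\{L_1,L_2\}$ and $$L_1=\frac{\sigma_w^2+\sigma_v^2\lambda_{\min}(L_{e,s}^\tau)\lambda_{\max}(W^{1/2})^2}{\lambda_{\min}(L_{e,s}^\tau)\lambda_{\max}(W^{1/2})^4},$$ $$L_2=\frac{\sigma_w^2+\sigma_v^2\lambda_{\max}(L_{e,s}^\tau)\lambda_{\max}(W^{1/2})\lambda_{\min}(W^{1/2})}{\lambda_{\max}(L_{e,s}^\tau)\lambda_{\max}(W^{1/2})^3\lambda_{\min}(W^{1/2})},$$ $$U=\frac{\sigma_w^2+\sigma_v^2\lambda_{\min}(L_{e,s}^\tau)\lambda_{\min}(W^{1/2})^2}{\lambda_{\min}(L_{e,s}^\tau)\lambda_{\min}(W^{1/2})^4}.$$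
   Context: The incidence matrix of a graph with an arbitrary orientation of each edge has entry $1$ in row $i$, column $l$ if node $i$ is the initial node of edge $l$, $-1$ if it is the terminal node, and $0$ otherwise. Powers of positive diagonal matrices are taken entrywise. $\lambda_{\max},\lambda_{\min}$ denote the largest and smallest eigenvalues of a symmetric matrix. For a stable transfer matrix $\Phi(s)$, $\|\Phi\|_\infty=\sup_{\omega\in\mathbb R}\bar\sigma(\Phi(j\omega))$ where $\bar\sigma$ is the largest singular value. *)

(* Defs.v *)
From HB Require Import structures.
From mathcomp Require Import all_boot all_order all_algebra.
From mathcomp Require Import classical_sets boolp reals.
From mathcomp Require Import Rstruct.
From mathcomp Require Import complex.
From Stdlib Require Import Reals.
Set Implicit Arguments. Unset Strict Implicit. Unset Printing Implicit Defensive.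
Import Order.TTheory GRing.Theory Num.Theory.
Local Open Scope ring_scope.
Local Open Scope classical_set_scope.

Notation Rl := Rdefinitions.R.

Definition incidence (n m : nat) (src dst : 'I_m -> 'I_n) : 'M[Rl]_(n, m) :=
  \matrix_(i < n, l < m)
    (if i == src l then 1 else if i == dst l then -1 else 0).

Definition adj (n m : nat) (src dst : 'I_m -> 'I_n) : rel 'I_n :=
  fun i j => [exists l, ((src l == i) && (dst l == j)) || ((src l == j) && (dst l == i))].

(* The graph on nodes 'I_n with the n-1 edges (src l, dst l), l : 'I_n.-1,
   is a tree: no self loops and connected (a connected graph with n nodes
   and n-1 edges is a tree). *)
Definition is_oriented_tree (n : nat) (src dst : 'I_n.-1 -> 'I_n) : Prop :=
  (forall l, src l != dst l) /\ (forall i j : 'I_n, connect (adj src dst) i j).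

Definition lambda_max (k : nat) (A : 'M[Rl]_k) : Rl := sup [set a | eigenvalue A a].
Definition lambda_min (k : nat) (A : 'M[Rl]_k) : Rl := inf [set a | eigenvalue A a].

Definition cmx (p q : nat) (A : 'M[Rl]_(p, q)) : 'M[Rl[i]]_(p, q) :=
  map_mx (fun x => x%:C%C) A.
Definition ctrmx (p q : nat) (M : 'M[Rl[i]]_(p, q)) : 'M[Rl[i]]_(q, p) :=
  (map_mx (@conjc Rl) M)^T.

Definition sigma_max (p q : nat) (M : 'M[Rl[i]]_(p, q)) : Rl :=
  sup [set s : Rl | 0 <= s /\ eigenvalue (M *m ctrmx M) ((s ^+ 2)%:C%C)].

Definition diagR (k : nat) (d : 'I_k -> Rl) : 'M[Rl]_k := diag_mx (\row_i d i).

Section Model.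
Variables (n : nat) (src dst : 'I_n.-1 -> 'I_n) (w : 'I_n.-1 -> Rl)
  (eps : 'I_n -> Rl) (sw sv : Rl).

Definition Dtau : 'M[Rl]_(n, n.-1) := incidence src dst.
Definition Wm : 'M[Rl]_(n.-1) := diagR w.
Definition Whalf : 'M[Rl]_(n.-1) := diagR (fun l => Num.sqrt (w l)).
Definition Einv : 'M[Rl]_n := diagR (fun i => (eps i)^-1).
Definition Einvhalf : 'M[Rl]_n := diagR (fun i => (Num.sqrt (eps i))^-1).
Definition Les : 'M[Rl]_(n.-1) := Dtau^T *m Einv *m Dtau.

Definition Sigma_tau (om : Rl) : 'M[Rl[i]]_(n.-1, n + n.-1) :=
  invmx ((0 +i* om)%C%:M + cmx (Les *m Wm))
  *m cmx (row_mx (sw *: (Dtau^T *m Einvhalf)) (- sv *: (Les *m Whalf))).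

Definition Hinf_set : set Rl := [set sigma_max (Sigma_tau om) | om in setT].
Definition Hinf_norm : Rl := sup Hinf_set.
End Model.

(* Main.v *)
Require Import Defs.
From HB Require Import structures.
From mathcomp Require Import all_boot all_order all_algebra.
From mathcomp Require Import classical_sets boolp reals.
From mathcomp Require Import Rstruct.
From mathcomp Require Import complex.
From mathcomp Require Import ring lra.
Import Order.TTheory GRing.Theory Num.Theory.
Local Open Scope ring_scope.
Local Open Scope classical_set_scope.

Set Implicit Arguments. Unset Strict Implicit. Unset Printing Implicit Defensive.
Local Close Scope classical_set_scope.
Local Open Scope complex_scope.
Local Notation C := (Rl[i]).

Lemma ReD (a b : C) : complex.Re (a + b) = complex.Re a + complex.Re b.
Proof. by case: a b => [? ?] [? ?]. Qed.
Lemma ReN (a : C) : complex.Re (- a) = - complex.Re a.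
Proof. by case: a => [? ?]. Qed.
Lemma ImD (a b : C) : complex.Im (a + b) = complex.Im a + complex.Im b.
Proof. by case: a b => [? ?] [? ?]. Qed.
Lemma Re_sum I (r : seq I) (P : pred I) (F : I -> C) :
  complex.Re (\sum_(i <- r | P i) F i) = \sum_(i <- r | P i) complex.Re (F i).
Proof.
elim/big_rec2: _ => [|i y1 y2 _ <-]; first by [].
by rewrite ReD.
Qed.
Lemma ReMR (r : Rl) (a : C) : complex.Re (r%:C * a) = r * complex.Re a.
Proof. by case: a => [x y] /=; rewrite mul0r subr0. Qed.
Lemma ImMR (r : Rl) (a : C) : complex.Im (r%:C * a) = r * complex.Im a.
Proof. by case: a => [x y] /=; rewrite mul0r addr0. Qed.
Lemma Re_conj (a : C) : complex.Re (a^*)%C = complex.Re a.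
Proof. by case: a. Qed.
Lemma Re_mulJ (a : C) : complex.Re (a * (a^*)%C) = complex.Re a ^+ 2 + complex.Im a ^+ 2.
Proof. by case: a => x y /=; rewrite !expr2; lra. Qed.
Lemma Im_mulJ (a : C) : complex.Im (a * (a^*)%C) = 0.
Proof. by case: a => x y /=; lra. Qed.
Lemma conjc_eqIm (a : C) : (a^*)%C = a -> complex.Im a = 0.
Proof. by case: a => x y /= [] => h; lra. Qed.
Lemma Re_iom (om : Rl) (a : C) : complex.Re ((0 +i* om)%C * a) = - om * complex.Im a.
Proof. by case: a => x y /=; lra. Qed.

Lemma cjK (a : C) : ((a^*)^*)%C = a.
Proof. by case: a => x y /=; rewrite opprK. Qed.
Lemma cjD (a b : C) : ((a + b)^*)%C = (a^*)%C + (b^*)%C.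
Proof. by case: a b => [? ?] [? ?] /=; rewrite opprD. Qed.
Lemma cjM (a b : C) : ((a * b)^*)%C = (a^*)%C * (b^*)%C.
Proof. by case: a b => [x y] [z t] /=; congr (_ +i* _); lra. Qed.
Lemma cjN (a : C) : ((- a)^*)%C = - (a^*)%C.
Proof. by case: a. Qed.
Lemma cjR (r : Rl) : ((r%:C)^*)%C = r%:C.
Proof. by rewrite /= oppr0. Qed.
Lemma cj_sum I (r : seq I) (P : pred I) (F : I -> C) :
  ((\sum_(i <- r | P i) F i)^*)%C = \sum_(i <- r | P i) ((F i)^*)%C.
Proof.
elim/big_rec2: _ => [|i y1 y2 _ <-]; first by rewrite /= oppr0.
by rewrite cjD.
Qed.

Lemma ctrmx_mul p q r (A : 'M[C]_(p, q)) (B : 'M[C]_(q, r)) :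
  ctrmx (A *m B) = ctrmx B *m ctrmx A.
Proof.
rewrite /ctrmx -trmx_mul; congr (_^T); apply/matrixP => i j; rewrite !mxE cj_sum.
by apply: eq_bigr => l _; rewrite !mxE cjM.
Qed.
Lemma ctrmxK p q (A : 'M[C]_(p, q)) : ctrmx (ctrmx A) = A.
Proof. by apply/matrixP => i j; rewrite !mxE cjK. Qed.
Lemma ctrmxD p q (A B : 'M[C]_(p, q)) : ctrmx (A + B) = ctrmx A + ctrmx B.
Proof. by apply/matrixP => i j; rewrite !mxE cjD. Qed.
Lemma ctrmxZ p q (c : C) (A : 'M[C]_(p, q)) : ctrmx (c *: A) = (c^*)%C *: ctrmx A.
Proof. by apply/matrixP => i j; rewrite !mxE cjM. Qed.
Lemma cmxM p q r (A : 'M[Rl]_(p, q)) (B : 'M[Rl]_(q, r)) :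
  cmx (A *m B) = cmx A *m cmx B.
Proof. by rewrite /cmx (map_mxM (real_complex Rl)). Qed.
Lemma cmxD p q (A B : 'M[Rl]_(p, q)) : cmx (A + B) = cmx A + cmx B.
Proof. by apply/matrixP => i j; rewrite !mxE rmorphD. Qed.
Lemma cmxZ p q (c : Rl) (A : 'M[Rl]_(p, q)) : cmx (c *: A) = c%:C *: cmx A.
Proof. by apply/matrixP => i j; rewrite !mxE rmorphM. Qed.
Lemma cmxN p q (A : 'M[Rl]_(p, q)) : cmx (- A) = - cmx A.
Proof. by apply/matrixP => i j; rewrite !mxE rmorphN. Qed.
Lemma ctrmx_cmx p q (A : 'M[Rl]_(p, q)) : ctrmx (cmx A) = cmx A^T.
Proof. by apply/matrixP => i j; rewrite !mxE cjR. Qed.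
Lemma cmx_row p q1 q2 (A : 'M[Rl]_(p, q1)) (B : 'M[Rl]_(p, q2)) :
  cmx (row_mx A B) = row_mx (cmx A) (cmx B).
Proof. by rewrite /cmx map_row_mx. Qed.

Definition dotc k (x y : 'rV[C]_k) : C := (x *m ctrmx y) 0 0.
Definition rd k (x y : 'rV[C]_k) : Rl := complex.Re (dotc x y).

Lemma dotcE k (x y : 'rV[C]_k) : dotc x y = \sum_i x 0 i * ((y 0 i)^*)%C.
Proof. by rewrite /dotc mxE; apply: eq_bigr => i _; rewrite !mxE. Qed.

Lemma dotc_mulmx k l (x : 'rV[C]_k) (A : 'M[C]_(k, l)) y :
  dotc (x *m A) y = dotc x (y *m ctrmx A).
Proof. by rewrite /dotc ctrmx_mul ctrmxK mulmxA. Qed.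

Lemma dotcC k (x y : 'rV[C]_k) : dotc y x = ((dotc x y)^*)%C.
Proof.
rewrite !dotcE cj_sum; apply: eq_bigr => i _.
by rewrite cjM cjK mulrC.
Qed.

Lemma dotcDl k (x1 x2 y : 'rV[C]_k) : dotc (x1 + x2) y = dotc x1 y + dotc x2 y.
Proof. by rewrite /dotc mulmxDl mxE. Qed.
Lemma dotcZl k (c : C) (x y : 'rV[C]_k) : dotc (c *: x) y = c * dotc x y.
Proof. by rewrite /dotc -scalemxAl mxE. Qed.
Lemma dotcNl k (x y : 'rV[C]_k) : dotc (- x) y = - dotc x y.
Proof. by rewrite /dotc mulNmx mxE. Qed.
Lemma dotcDr k (x y1 y2 : 'rV[C]_k) : dotc x (y1 + y2) = dotc x y1 + dotc x y2.
Proof. by rewrite /dotc ctrmxD mulmxDr mxE. Qed.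

Lemma rdC k (x y : 'rV[C]_k) : rd y x = rd x y.
Proof. by rewrite /rd dotcC Re_conj. Qed.
Lemma rdDl k (x1 x2 y : 'rV[C]_k) : rd (x1 + x2) y = rd x1 y + rd x2 y.
Proof. by rewrite /rd dotcDl ReD. Qed.
Lemma rdDr k (x y1 y2 : 'rV[C]_k) : rd x (y1 + y2) = rd x y1 + rd x y2.
Proof. by rewrite /rd dotcDr ReD. Qed.
Lemma rdNl k (x y : 'rV[C]_k) : rd (- x) y = - rd x y.
Proof. by rewrite /rd dotcNl ReN. Qed.
Lemma rdNr k (x y : 'rV[C]_k) : rd x (- y) = - rd x y.
Proof. by rewrite rdC rdNl rdC. Qed.
Lemma rdZl k (c : Rl) (x y : 'rV[C]_k) : rd (c%:C *: x) y = c * rd x y.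
Proof. by rewrite /rd dotcZl ReMR. Qed.
Lemma rdZr k (c : Rl) (x y : 'rV[C]_k) : rd x (c%:C *: y) = c * rd x y.
Proof. by rewrite rdC rdZl rdC. Qed.
Lemma rd_mulmx k l (x : 'rV[C]_k) (A : 'M[C]_(k, l)) y :
  rd (x *m A) y = rd x (y *m ctrmx A).
Proof. by rewrite /rd dotc_mulmx. Qed.

Lemma rdE k (x : 'rV[C]_k) :
  rd x x = \sum_i (complex.Re (x 0 i) ^+ 2 + complex.Im (x 0 i) ^+ 2).
Proof. by rewrite /rd dotcE Re_sum; apply: eq_bigr => i _; rewrite Re_mulJ. Qed.

Lemma rd_ge0 k (x : 'rV[C]_k) : 0 <= rd x x.
Proof. by rewrite rdE; apply: sumr_ge0 => i _; rewrite addr_ge0 ?sqr_ge0. Qed.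

Lemma rd_gt0 k (x : 'rV[C]_k) : x != 0 -> 0 < rd x x.
Proof.
move=> xn0; rewrite lt_def rd_ge0 andbT; apply: contra xn0 => /eqP h.
apply/eqP/rowP => i; rewrite mxE.
have := h; rewrite rdE => /eqP; rewrite psumr_eq0; last first.
  by move=> j _; rewrite addr_ge0 ?sqr_ge0.
move=> /allP /(_ i (mem_index_enum i)) /=.
rewrite paddr_eq0 ?sqr_ge0 // !sqrf_eq0 => /andP [/eqP h1 /eqP h2].
by move: (x 0 i) h1 h2 => [a b] /= -> ->.
Qed.

Lemma rd_row k1 k2 (a b : 'rV[C]_k1) (c d : 'rV[C]_k2) :
  rd (row_mx a c) (row_mx b d) = rd a b + rd c d.
Proof.
by rewrite /rd /dotc /ctrmx map_row_mx tr_row_mx mul_row_col mxE ReD.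
Qed.

Lemma Im_herm k (A : 'M[C]_k) (x : 'rV[C]_k) : ctrmx A = A ->
  complex.Im (dotc (x *m A) x) = 0.
Proof.
move=> hA; apply: conjc_eqIm.
by rewrite -dotcC dotc_mulmx hA.
Qed.

Lemma fin_argmin k (f : 'I_k.+1 -> Rl) : exists i, forall j, f i <= f j.
Proof.
case: (@arg_minP _ _ _ ord0 xpredT f isT) => i _ h; exists i => j; exact: h.
Qed.
Lemma fin_argmax k (f : 'I_k.+1 -> Rl) : exists i, forall j, f j <= f i.
Proof.
case: (@arg_maxP _ _ _ ord0 xpredT f isT) => i _ h; exists i => j; exact: h.
Qed.

Lemma ctrmxE p q (M : 'M[C]_(p, q)) : ctrmx M = (M ^t* )%sesqui.
Proof. by apply/matrixP => i j; rewrite !mxE. Qed.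

Lemma rd_diag k (r : 'rV[C]_k) (d : 'rV[C]_k) :
  (forall i, d 0 i = (complex.Re (d 0 i))%:C) ->
  rd (r *m diag_mx d) r =
  \sum_i complex.Re (d 0 i) * (complex.Re (r 0 i) ^+ 2 + complex.Im (r 0 i) ^+ 2).
Proof.
move=> hd; rewrite /rd dotcE Re_sum; apply: eq_bigr => i _.
rewrite mul_mx_diag mxE hd mulrAC mulrC ReMR Re_mulJ.
by rewrite -hd.
Qed.

Lemma herm_rayleigh k (A : 'M[C]_k.+1) : ctrmx A = A ->
  exists lo hi : Rl, [/\ eigenvalue A lo%:C, eigenvalue A hi%:C &
     forall x, lo * rd x x <= rd (x *m A) x <= hi * rd x x].
Proof.
move=> hA.
have hherm : A \is hermsymmx.
  by rewrite is_hermitianmxE expr0 scale1r -ctrmxE hA.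
have /orthomx_spectralP Aeq := hermitian_normalmx hherm.
set P := spectralmx A in Aeq; set d := spectral_diag A in Aeq.
have Pu : P \is unitarymx by apply: spectral_unitarymx.
have Punit : P \in unitmx by apply: spectral_unit.
have iP : invmx P = ctrmx P by rewrite invmx_unitary // ctrmxE.
have dreal : forall i, d 0 i = (complex.Re (d 0 i))%:C.
  move=> i; have /mxOverP /(_ 0 i) := hermitian_spectral_diag_real hherm.
  by case: (d 0 i) => a b; rewrite complex_real => /eqP ->.
set dr := fun i => complex.Re (d 0 i).
have eig : forall i, eigenvalue A (dr i)%:C.
  move=> i; apply/eigenvalueP; exists (row i P).
    rewrite Aeq !mulmxA -row_mul mulmxV // row1 -rowE row_diag_mx.
    by rewrite -scalemxAl -rowE -dreal.
  apply/eqP => h.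
  have : row i P *m invmx P = row i 1%:M by rewrite -row_mul mulmxV.
  rewrite h mul0mx row1 => /matrixP /(_ 0 i); rewrite !mxE eqxx /=.
  by rewrite eqxx => /eqP; rewrite eq_sym oner_eq0.
have [i0 hi0] := fin_argmin dr.
have [i1 hi1] := fin_argmax dr.
exists (dr i0), (dr i1); split => // x.
set r := x *m ctrmx P.
have e1 : rd (x *m A) x = rd (r *m diag_mx d) r.
  by rewrite Aeq iP !mulmxA rd_mulmx.
have e2 : rd x x = rd r r.
  rewrite /r rd_mulmx ctrmxK -iP mulmxKV //.
rewrite e1 e2 rd_diag // rdE.
have nn : forall i, 0 <= complex.Re (r 0 i) ^+ 2 + complex.Im (r 0 i) ^+ 2.
  by move=> i; rewrite addr_ge0 ?sqr_ge0.
rewrite !mulr_sumr; apply/andP; split; apply: ler_sum => i _;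
  apply: ler_wpM2r => //; [exact: hi0 | exact: hi1].
Qed.

Lemma eig_cmx k (A : 'M[Rl]_k) (a : Rl) : eigenvalue (cmx A) a%:C = eigenvalue A a.
Proof.
rewrite !eigenvalue_root_char.
have -> : cmx A = map_mx (real_complex Rl) A by [].
by rewrite -map_char_poly fmorph_root.
Qed.

Lemma eig_rayleigh k (A : 'M[C]_k) (lo hi a : Rl) :
  (forall x, lo * rd x x <= rd (x *m A) x <= hi * rd x x) ->
  eigenvalue A a%:C -> lo <= a <= hi.
Proof.
move=> hr /eigenvalueP [v hv vn0].
have pos := rd_gt0 vn0.
by have := hr v; rewrite hv rdZl !(ler_pM2r pos).
Qed.

Lemma sym_spec k (A : 'M[Rl]_k.+1) : A^T = A ->
  exists lo hi : Rl, [/\ lambda_min A = lo, lambda_max A = hi,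
     eigenvalue A lo, eigenvalue A hi &
     forall x : 'rV[C]_k.+1, lo * rd x x <= rd (x *m cmx A) x <= hi * rd x x].
Proof.
move=> hs.
have [lo [hi [elo ehi hr]]] : exists lo hi : Rl, [/\ eigenvalue (cmx A) lo%:C,
   eigenvalue (cmx A) hi%:C &
     forall x, lo * rd x x <= rd (x *m cmx A) x <= hi * rd x x].
  by apply: herm_rayleigh; rewrite ctrmx_cmx hs.
rewrite !eig_cmx in elo ehi.
have bnd : forall a, eigenvalue A a -> lo <= a <= hi.
  by move=> a; rewrite -eig_cmx; apply: eig_rayleigh.
exists lo, hi; split => //.
- rewrite /lambda_min; apply/eqP; rewrite eq_le; apply/andP; split.
    apply: (ge_inf (E := [set a | eigenvalue A a])) => //.
    by exists lo => a /bnd /andP [].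
  by apply: lb_le_inf; [exists lo | move=> a /bnd /andP []].
- rewrite /lambda_max; apply/eqP; rewrite eq_le; apply/andP; split.
    by apply: ge_sup; [exists hi | move=> a /bnd /andP []].
  apply: (ub_le_sup (E := [set a | eigenvalue A a])) => //.
  by exists hi => a /bnd /andP [].
Qed.

Lemma incid_row n m (src dst : 'I_m -> 'I_n) (z : 'rV[Rl]_n) l :
  src l != dst l ->
  (z *m incidence src dst) 0 l = z 0 (src l) - z 0 (dst l).
Proof.
move=> hsd; rewrite mxE (bigD1 (src l)) //= (bigD1 (dst l)) //=; last first.
  by rewrite eq_sym.
have hds : dst l != src l by rewrite eq_sym.
rewrite big1 ?addr0.
  by rewrite !mxE eqxx (negbTE hds) eqxx mulr1 mulrN1.
by move=> i /andP [h1 h2]; rewrite !mxE (negbTE h1) (negbTE h2) mulr0.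
Qed.

Lemma tree_rank n (src dst : 'I_n.-1 -> 'I_n) : is_oriented_tree src dst ->
  (0 < n)%N -> \rank (Dtau src dst) = n.-1.
Proof.
move=> [nl conn] n0.
apply/eqP; rewrite eqn_leq rank_leq_col /=.
set j0 := Ordinal n0.
have hker : (kermx (Dtau src dst) <= (const_mx 1 : 'rV[Rl]_n))%MS.
  apply/row_subP => i; set z := row i _.
  have zD : z *m Dtau src dst = 0 by apply/sub_kermxP; rewrite row_sub.
  have eqz : forall j, z 0 j = z 0 j0.
    move=> j.
    have cl : closed (adj src dst) [pred x | z 0 x == z 0 j0].
      move=> x y /existsP [l /orP [/andP [/eqP <- /eqP <-] | /andP [/eqP <- /eqP <-]]] /=;
      have := congr1 (fun M : 'M[Rl]_(1, n.-1) => M 0 l) zD; rewrite /Dtau incid_row // !mxE => /eqP;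
      by rewrite subr_eq0 => /eqP h; rewrite !inE /z !mxE h.
    have := closed_connect cl (conn j0 j).
    by rewrite !inE eqxx => /esym /eqP.
  have -> : z = z 0 j0 *: const_mx 1.
    by apply/rowP => j; rewrite eqz [in RHS]mxE [const_mx _ _ _]mxE mulr1.
  exact: scalemx_sub.
have h1 := mxrankS hker.
rewrite mxrank_ker in h1.
have h2 : (\rank (const_mx (1%R:Rl) : 'rV[Rl]_n) <= 1)%N := rank_leq_row _.
have := leq_trans h1 h2.
case: n src dst {nl conn j0 hker h1 h2} n0 => // n src dst _ /=.
by rewrite leq_subLR addn1 ltnS.
Qed.

Definition nn k (y : 'rV[C]_k) i := complex.Re (y 0 i) ^+ 2 + complex.Im (y 0 i) ^+ 2.

Lemma nn_ge0 k (y : 'rV[C]_k) i : 0 <= nn y i.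
Proof. by rewrite /nn addr_ge0 ?sqr_ge0. Qed.

Lemma cmx_diagR k (d : 'I_k -> Rl) : cmx (diagR d) = diag_mx (\row_i (d i)%:C).
Proof.
apply/matrixP => i j; rewrite !mxE; case: (i == j) => //=.
Qed.

Lemma rd_diagR k (d : 'I_k -> Rl) (y : 'rV[C]_k) :
  rd (y *m cmx (diagR d)) y = \sum_i d i * nn y i.
Proof.
rewrite cmx_diagR rd_diag; last by move=> i; rewrite mxE.
by apply: eq_bigr => i _; rewrite mxE.
Qed.

Lemma rdE' k (y : 'rV[C]_k) : rd y y = \sum_i nn y i.
Proof. by rewrite rdE. Qed.

Lemma diag_lb k (d : 'I_k -> Rl) (m : Rl) (y : 'rV[C]_k) :
  (forall i, m <= d i) -> m * rd y y <= rd (y *m cmx (diagR d)) y.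
Proof.
move=> h; rewrite rd_diagR rdE' mulr_sumr; apply: ler_sum => i _.
by apply: ler_wpM2r; [exact: nn_ge0 | exact: h].
Qed.

Lemma diag_ub k (d : 'I_k -> Rl) (m : Rl) (y : 'rV[C]_k) :
  (forall i, d i <= m) -> rd (y *m cmx (diagR d)) y <= m * rd y y.
Proof.
move=> h; rewrite rd_diagR rdE' mulr_sumr; apply: ler_sum => i _.
by apply: ler_wpM2r; [exact: nn_ge0 | exact: h].
Qed.

Lemma diagR_tr k (d : 'I_k -> Rl) : (diagR d)^T = diagR d.
Proof. by rewrite /diagR tr_diag_mx. Qed.

Lemma ctrmx_diagR k (d : 'I_k -> Rl) : ctrmx (cmx (diagR d)) = cmx (diagR d).
Proof. by rewrite ctrmx_cmx diagR_tr. Qed.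

Lemma diagRM k (d e : 'I_k -> Rl) : diagR d *m diagR e = diagR (fun i => d i * e i).
Proof. by rewrite /diagR mulmx_diag; congr diag_mx; apply/rowP => i; rewrite !mxE. Qed.

Lemma diag_eig k (d : 'I_k -> Rl) a : eigenvalue (diagR d) a <-> exists i, a = d i.
Proof.
split.
  move=> /eigenvalueP [v hv vn0].
  have [i vi] : exists i, v 0 i != 0.
    apply/existsP; apply: contraR vn0; rewrite negb_exists => /forallP h.
    by apply/eqP/rowP => i; rewrite mxE; apply/eqP; have := h i; rewrite negbK.
  exists i; have := congr1 (fun M : 'rV[Rl]_k => M 0 i) hv.
  rewrite /diagR mul_mx_diag !mxE => /eqP.
  rewrite [a * _]mulrC -subr_eq0 -mulrBr mulf_eq0 (negbTE vi) /= subr_eq0.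
  by move/eqP.
move=> [i ->]; apply/eigenvalueP; exists ('e_i : 'rV[Rl]_k).
  by rewrite /diagR -rowE row_diag_mx mxE.
apply/eqP => /rowP /(_ i); rewrite !mxE !eqxx /= => /eqP; by rewrite oner_eq0.
Qed.

Lemma diag_spec k (d : 'I_k.+1 -> Rl) :
  exists i0 i1, [/\ lambda_min (diagR d) = d i0, lambda_max (diagR d) = d i1 &
    forall j, d i0 <= d j <= d i1].
Proof.
have [lo [hi [elo ehi e1 e2 hr]]] := sym_spec (diagR_tr d).
have [i0 h0] := (diag_eig d lo).1 e1.
have [i1 h1] := (diag_eig d hi).1 e2.
exists i0, i1; rewrite -h0 -h1; split => // j.
apply: (@eig_rayleigh _ (cmx (diagR d))) => //.
by rewrite eig_cmx; apply/diag_eig; exists j.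
Qed.

Section Lap.
Variables (m : nat) (src dst : 'I_m.+1 -> 'I_m.+2) (eps : 'I_m.+2 -> Rl).
Hypothesis tree : @is_oriented_tree m.+2 src dst.
Hypothesis epspos : forall i, 0 < eps i.

Let D : 'M[Rl]_(m.+2, m.+1) := @Dtau m.+2 src dst.
Let L : 'M[Rl]_(m.+1) := @Les m.+2 src dst eps.

Lemma Les_sym : L^T = L.
Proof.
by rewrite /L /Les !trmx_mul trmxK /Einv diagR_tr mulmxA.
Qed.

Lemma Les_form (x : 'rV[C]_m.+1) :
  rd (x *m cmx L) x = rd ((x *m cmx D^T) *m cmx (Einv eps)) (x *m cmx D^T).
Proof.
by rewrite /L /Les !cmxM !mulmxA rd_mulmx ctrmx_cmx.
Qed.

Lemma D_free (x : 'rV[C]_m.+1) : x != 0 -> x *m cmx D^T != 0.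
Proof.
move=> xn0; rewrite mulmx_free_eq0 //.
rewrite /row_free.
have -> : cmx D^T = map_mx (real_complex Rl) D^T by [].
by rewrite mxrank_map mxrank_tr /D tree_rank.
Qed.

Lemma L_spec : exists lL lH : Rl, [/\ lambda_min L = lL, lambda_max L = lH,
   0 < lL, eigenvalue (cmx L) lL%:C &
   forall x : 'rV[C]_m.+1, lL * rd x x <= rd (x *m cmx L) x <= lH * rd x x].
Proof.
have [lo [hi [elo ehi e1 e2 hr]]] := sym_spec Les_sym.
exists lo, hi; split => //; last by rewrite eig_cmx.
move: (e1); rewrite -eig_cmx => /eigenvalueP [v hv vn0].
have [i0 hi0] := fin_argmin (fun i => (eps i)^-1).
have mpos : 0 < (eps i0)^-1 by rewrite invr_gt0.
have yn0 := D_free vn0.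
have h1 := rd_gt0 yn0.
have h2 := @diag_lb _ _ _ (v *m cmx D^T) hi0.
have h3 : 0 < rd (v *m cmx L) v.
  rewrite Les_form; apply: lt_le_trans h2; exact: mulr_gt0.
move: h3; rewrite hv rdZl.
by rewrite pmulr_lgt0 // rd_gt0.
Qed.
End Lap.

Lemma dotcZr k (c : C) (x y : 'rV[C]_k) : dotc x (c *: y) = (c^*)%C * dotc x y.
Proof. by rewrite /dotc ctrmxZ -scalemxAr mxE. Qed.

Lemma rd_scale2 k (c : Rl) (x : 'rV[C]_k) : rd (c%:C *: x) (c%:C *: x) = c ^+ 2 * rd x x.
Proof. by rewrite rdZl rdZr mulrA expr2. Qed.

Lemma rd_iom k (om : Rl) (t u : 'rV[C]_k) :
  rd ((0 +i* om) *: t) u = - om * complex.Im (dotc t u).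
Proof. by rewrite /rd dotcZl Re_iom. Qed.

Lemma rd_iom2 k (om : Rl) (t : 'rV[C]_k) :
  rd ((0 +i* om) *: t) ((0 +i* om) *: t) = om ^+ 2 * rd t t.
Proof.
rewrite /rd dotcZl dotcZr mulrA.
have -> : (0 +i* om) * ((0 +i* om)^*)%C = (om ^+ 2)%:C.
  by rewrite /= expr2; congr (_ +i* _); lra.
by rewrite ReMR.
Qed.

Lemma Im_dotc_self k (t : 'rV[C]_k) : complex.Im (dotc t t) = 0.
Proof.
have := Im_herm t (A := 1%:M); rewrite mulmx1; apply.
have e1 : cmx (1%:M : 'M[Rl]_k) = 1%:M.
  by apply/matrixP => i j; rewrite !mxE; case: (i == j).
by rewrite -e1 ctrmx_cmx trmx1.
Qed.

Lemma Im_conj (a : C) : complex.Im ((a^*)%C) = - complex.Im a.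
Proof. by case: a. Qed.

Section Sys.
Variables (m : nat) (src dst : 'I_m.+1 -> 'I_m.+2) (w : 'I_m.+1 -> Rl)
  (eps : 'I_m.+2 -> Rl) (sw sv : Rl).
Hypothesis tree : @is_oriented_tree m.+2 src dst.
Hypothesis wpos : forall l, 0 < w l.
Hypothesis epspos : forall i, 0 < eps i.

Let D : 'M[Rl]_(m.+2, m.+1) := @Dtau m.+2 src dst.
Let L : 'M[Rl]_(m.+1) := @Les m.+2 src dst eps.
Let Wh : 'M[Rl]_(m.+1) := @Whalf m.+2 w.
Let Wm : 'M[Rl]_(m.+1) := @Wm m.+2 w.
Let Eh : 'M[Rl]_(m.+2) := @Einvhalf m.+2 eps.
Let B := row_mx (sw *: (D^T *m Eh)) (- sv *: (L *m Wh)).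
Let S := Wh *m L *m Wh.

Lemma WhWh : Wh *m Wh = Wm.
Proof.
rewrite /Wh /Whalf diagRM /Wm /Defs.Wm; congr diagR; apply: funext => l.
by rewrite -expr2 sqr_sqrtr // ltW.
Qed.

Lemma EhEh : Eh *m Eh^T = Einv eps.
Proof.
rewrite /Eh /Einvhalf diagR_tr diagRM /Einv; congr diagR; apply: funext => i.
by rewrite -expr2 exprVn sqr_sqrtr // ltW.
Qed.

Lemma DEhL : (D^T *m Eh) *m (D^T *m Eh)^T = L.
Proof. by rewrite trmx_mul trmxK mulmxA -(mulmxA _ Eh) EhEh. Qed.

Lemma rd_cmx_sq p q (u : 'rV[C]_p) (M : 'M[Rl]_(p, q)) :
  rd (u *m cmx M) (u *m cmx M) = rd (u *m cmx (M *m M^T)) u.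
Proof. by rewrite rd_mulmx ctrmx_cmx -mulmxA -cmxM rdC. Qed.

Lemma split_B (u : 'rV[C]_(m.+1)) :
  rd (u *m cmx B) (u *m cmx B) =
  sw ^+ 2 * rd (u *m cmx L) u + sv ^+ 2 * rd (u *m cmx (L *m Wh)) (u *m cmx (L *m Wh)).
Proof.
rewrite /B cmx_row mul_mx_row rd_row !cmxZ -!scalemxAr !rd_scale2 sqrrN.
by rewrite (rd_cmx_sq u (D^T *m Eh)) DEhL.
Qed.

Lemma Wh_tr : Wh^T = Wh.
Proof. exact: diagR_tr. Qed.
Lemma L_tr : L^T = L.
Proof. exact: Les_sym. Qed.
Lemma S_herm : ctrmx (cmx S) = cmx S.
Proof. by rewrite ctrmx_cmx /S trmx_mul [(Wh *m L)^T]trmx_mul Wh_tr L_tr mulmxA. Qed.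

Lemma rd0l k (y : 'rV[C]_k) : rd 0 y = 0.
Proof. by rewrite /rd /dotc mul0mx mxE. Qed.

Lemma rd_Wh (z : 'rV[C]_(m.+1)) : rd (z *m cmx Wh) (z *m cmx Wh) = rd (z *m cmx Wm) z.
Proof. by rewrite rd_cmx_sq Wh_tr WhWh. Qed.

Lemma rd_S (t : 'rV[C]_(m.+1)) : rd (t *m cmx S) t = rd (t *m cmx Wh *m cmx L) (t *m cmx Wh).
Proof. by rewrite /S !cmxM !mulmxA rd_mulmx ctrmx_cmx Wh_tr. Qed.

Lemma Im_tS (t : 'rV[C]_(m.+1)) : complex.Im (dotc t (t *m cmx S)) = 0.
Proof. by rewrite dotcC Im_conj Im_herm ?S_herm // oppr0. Qed.

Lemma Wh_unit : cmx Wh \in unitmx.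
Proof.
suff h : cmx Wh *m cmx (diagR (fun l => (Num.sqrt (w l))^-1)) = 1%:M.
  by case: (mulmx1_unit h).
rewrite -cmxM /Wh /Whalf diagRM.
apply/matrixP => i j; rewrite !mxE; case: (i == j) => //=.
rewrite divff // gt_eqF // sqrtr_gt0 //.
Qed.

Variables (lL wmn : Rl).
Hypothesis lLpos : 0 < lL.
Hypothesis hL : forall x, lL * rd x x <= rd (x *m cmx L) x.
Hypothesis wmnpos : 0 < wmn.
Hypothesis hw : forall l, wmn <= Num.sqrt (w l).

Lemma Wm_lb (z : 'rV[C]_(m.+1)) : wmn ^+ 2 * rd z z <= rd (z *m cmx Wm) z.
Proof.
apply: diag_lb => l.
rewrite -[w l](sqr_sqrtr (ltW (wpos l))) ler_pXn2r // ?nnegrE ?ltW ?sqrtr_ge0 //.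
all: try (by apply: hw); by rewrite sqrtr_gt0.
Qed.

Lemma S_lb (t : 'rV[C]_(m.+1)) : lL * wmn ^+ 2 * rd t t <= rd (t *m cmx S) t.
Proof.
rewrite rd_S; apply: le_trans (hL _).
rewrite rd_Wh -mulrA; apply: ler_wpM2l; [exact: ltW | exact: Wm_lb].
Qed.

Let Y om : 'M[C]_(m.+1) := (0 +i* om)%:M + cmx S.
Let X om : 'M[C]_(m.+1) := (0 +i* om)%:M + cmx (L *m Wm).

Lemma rd_tY om (t : 'rV[C]_(m.+1)) :
  rd (t *m Y om) (t *m Y om) = om ^+ 2 * rd t t + rd (t *m cmx S) (t *m cmx S).
Proof.
rewrite /Y mulmxDr mul_mx_scalar rdDl !rdDr rd_iom2 (rdC ((0 +i* om) *: t)) rd_iom Im_tS.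
by rewrite mulr0 !addr0 add0r.
Qed.

Lemma rd_tY_t om (t : 'rV[C]_(m.+1)) : rd (t *m Y om) t = rd (t *m cmx S) t.
Proof.
by rewrite /Y mulmxDr mul_mx_scalar rdDl rd_iom Im_dotc_self mulr0 add0r.
Qed.

Lemma Y_unit om : Y om \in unitmx.
Proof.
rewrite -row_free_unit -kermx_eq0; apply/eqP/row_matrixP => i; rewrite row0.
set t := row i _.
have tY : t *m Y om = 0 by apply/sub_kermxP; rewrite row_sub.
apply/eqP; apply: contraT => tn0.
have h1 := rd_gt0 tn0.
have h2 := S_lb t.
have := rd_tY_t om t; rewrite tY rd0l => h3.
have : 0 < lL * wmn ^+ 2 * rd t t by rewrite !mulr_gt0 // exprn_gt0.
by rewrite -h3 in h2; move=> h4; have := lt_le_trans h4 h2; rewrite ltxx.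
Qed.

Lemma X_conj om : cmx Wh *m X om = Y om *m cmx Wh.
Proof.
rewrite /X /Y mulmxDr mulmxDl mul_mx_scalar mul_scalar_mx; congr (_ + _).
by rewrite -!cmxM /S -WhWh !mulmxA.
Qed.

Lemma X_unit om : X om \in unitmx.
Proof.
have := unitmx_mul (cmx Wh) (X om); rewrite X_conj unitmx_mul Y_unit Wh_unit /=.
by move=> <-.
Qed.


Lemma Sig_eq om : @Sigma_tau m.+2 src dst w eps sw sv om = invmx (X om) *m cmx B.
Proof. by []. Qed.

Lemma upper om (y : 'rV[C]_(m.+1)) :
  rd (y *m @Sigma_tau m.+2 src dst w eps sw sv om)
     (y *m @Sigma_tau m.+2 src dst w eps sw sv om) <=
  (sw ^+ 2 + sv ^+ 2 * lL * wmn ^+ 2) / (lL * wmn ^+ 4) * rd y y.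
Proof.
rewrite Sig_eq.
set t := y *m invmx (cmx Wh) *m invmx (Y om).
have ey : y = t *m Y om *m cmx Wh by rewrite /t !mulmxKV ?Y_unit ?Wh_unit.
have eyX : y *m invmx (X om) = t *m cmx Wh.
  by rewrite {1}ey -(mulmxA t) -X_conj mulmxA mulmxK // X_unit.
rewrite mulmxA eyX split_B.
have e1 : t *m cmx Wh *m cmx (L *m Wh) = t *m cmx S.
  by rewrite /S -mulmxA -cmxM mulmxA.
rewrite e1 -rd_S.
set a := rd (t *m cmx S) t.
set b := rd (t *m cmx S) (t *m cmx S).
set nt := rd t t.
have hnt : 0 <= nt := rd_ge0 t.
set mu := lL * wmn ^+ 2.
have mupos : 0 < mu by rewrite mulr_gt0 // exprn_gt0.
have ha : mu * nt <= a := S_lb t.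
have hb0 : 0 <= b - 2 * mu * a + mu ^+ 2 * nt.
  have := rd_ge0 (t *m cmx S + (- mu)%:C *: t).
  rewrite rdDl !rdDr !rdZl !rdZr (rdC (t *m cmx S) t) -/a -/b -/nt => h; nra.
have hb : mu * a <= b by nra.
have hy : wmn ^+ 2 * (om ^+ 2 * nt + b) <= rd y y.
  by rewrite ey rd_Wh; apply: le_trans (Wm_lb _); rewrite rd_tY.
set U := _ / _.
have eU : U * wmn ^+ 2 * mu = sw ^+ 2 + sv ^+ 2 * mu.
  rewrite /U /mu; field.
  by rewrite !gt_eqF.
have U0 : 0 <= U.
  rewrite /U; apply: divr_ge0.
    apply: addr_ge0; first exact: sqr_ge0.
    apply: mulr_ge0; last exact: sqr_ge0.
    by apply: mulr_ge0; [exact: sqr_ge0 | exact: ltW].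
  by apply/ltW; rewrite mulr_gt0 // exprn_gt0.
apply: le_trans (ler_wpM2l U0 hy).
have : 0 <= U * wmn ^+ 2 * om ^+ 2 * nt.
  apply: mulr_ge0 => //; apply: mulr_ge0; last exact: sqr_ge0.
  by apply: mulr_ge0 => //; exact: sqr_ge0.
move: eU; set V := U * wmn ^+ 2 => eU h.
have hsw : sw ^+ 2 * (mu * a) <= sw ^+ 2 * b by apply: ler_wpM2l => //; exact: sqr_ge0.
have : mu * (sw ^+ 2 * a + sv ^+ 2 * b) <= mu * (V * b).
  rewrite mulrA [mu * V]mulrC eU; nra.
rewrite ler_pM2l // => h2.
have -> : U * (wmn ^+ 2 * (om ^+ 2 * nt + b)) = V * om ^+ 2 * nt + V * b.
  by rewrite /V; ring.
nra.
Qed.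


Lemma X0E (t : 'rV[C]_(m.+1)) : t *m X 0 = t *m cmx L *m cmx Wm.
Proof.
rewrite /X mulmxDr mul_mx_scalar cmxM mulmxA.
have -> : (0 +i* 0 : C) = 0 by [].
by rewrite scale0r add0r.
Qed.

Lemma Wm_tr : Wm^T = Wm.
Proof. exact: diagR_tr. Qed.

Lemma rd_Wm2 (v : 'rV[C]_(m.+1)) :
  rd (v *m cmx Wm) (v *m cmx Wm) = \sum_i (w i) ^+ 2 * nn v i.
Proof.
rewrite rd_cmx_sq Wm_tr /Wm /Defs.Wm diagRM rd_diagR.
by apply: eq_bigr => i _; rewrite expr2.
Qed.

Variable wmx : Rl.
Hypothesis hwx : forall l, Num.sqrt (w l) <= wmx.
Hypothesis heig : eigenvalue (cmx L) lL%:C.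

Lemma lower1 : exists2 y : 'rV[C]_(m.+1), y != 0 &
  (sw ^+ 2 + sv ^+ 2 * lL * wmx ^+ 2) / (lL * wmx ^+ 4) * rd y y <=
  rd (y *m @Sigma_tau m.+2 src dst w eps sw sv 0)
     (y *m @Sigma_tau m.+2 src dst w eps sw sv 0).
Proof.
have /eigenvalueP [v hv vn0] := heig.
set t := (lL^-1)%:C *: v.
have tL : t *m cmx L = v.
  rewrite /t -scalemxAl hv scalerA.
  have -> : (lL^-1)%:C * lL%:C = 1.
    by rewrite -rmorphM /= mulVf ?gt_eqF.
  by rewrite scale1r.
have tn0 : t != 0.
  apply: contra vn0 => /eqP h; by rewrite -tL h mul0mx.
exists (t *m X 0).
  apply: contra tn0 => /eqP h.
  by rewrite -(mulmxK (X_unit 0) t) h mul0mx.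
rewrite Sig_eq mulmxA mulmxK ?X_unit // split_B.
rewrite X0E tL.
have e1 : t *m cmx (L *m Wh) = v *m cmx Wh by rewrite cmxM mulmxA tL.
rewrite e1 rd_Wh rd_Wm2 rd_diagR /t rdZr rdE' -/(nn v).
rewrite !mulr_sumr -big_split /=; apply: ler_sum => i _.
have wx : w i <= wmx ^+ 2.
  rewrite -[w i](sqr_sqrtr (ltW (wpos i))) ler_pXn2r // ?nnegrE ?sqrtr_ge0 //.
  by apply: le_trans (sqrtr_ge0 (w i)) (hwx i).
have wxpos : 0 < wmx by apply: lt_le_trans (hwx i); rewrite sqrtr_gt0.
have hn := nn_ge0 v i.
have wi := wpos i.
have e4 : wmx ^+ 4 = wmx ^+ 2 * wmx ^+ 2 by rewrite -exprD.
set W := wmx ^+ 2 in wx e4 *.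
have Wpos : 0 < W by rewrite exprn_gt0.
have hs := sqr_ge0 sw; have hv2 := sqr_ge0 sv.
have key : (sw ^+ 2 + sv ^+ 2 * lL * W) / (lL * wmx ^+ 4) * w i ^+ 2 <=
           sw ^+ 2 * lL^-1 + sv ^+ 2 * w i.
  rewrite mulrAC ler_pdivrMr; last by rewrite mulr_gt0 // exprn_gt0.
  rewrite e4 -/W.
  have -> : (sw ^+ 2 / lL + sv ^+ 2 * w i) * (lL * (W * W)) =
            sw ^+ 2 * (W * W) + sv ^+ 2 * w i * lL * (W * W).
    by field; rewrite gt_eqF.

  have h1 : w i * w i <= W * W by nra.
  have h0 : 0 <= w i * W by apply: mulr_ge0; apply: ltW.
  have h2 : w i * w i * W <= W * W * w i by nra.
  have h3 : 0 <= sw ^+ 2 * (W * W - w i * w i) by apply: mulr_ge0; lra.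
  have h4 : 0 <= sv ^+ 2 * lL * (W * W * w i - w i * w i * W).
    apply: mulr_ge0; [apply: mulr_ge0 => //; exact: ltW | lra].
  rewrite expr2; nra.
rewrite mulrA; apply: (le_trans (ler_wpM2r hn key)).
by rewrite mulrDl -!mulrA.
Qed.


Lemma rd_e (i : 'I_m.+1) : rd ('e_i : 'rV[C]_(m.+1)) 'e_i = 1.
Proof.
rewrite rdE (bigD1 i) //= big1 ?addr0.
  by rewrite !mxE !eqxx /= expr1n expr0n addr0.
by move=> j hj; rewrite !mxE (negbTE hj) /= expr0n addr0.
Qed.

Lemma L_psd (z : 'rV[C]_(m.+1)) : 0 <= rd (z *m cmx L) z.
Proof.
apply: le_trans (hL z); apply: mulr_ge0; [exact: ltW | exact: rd_ge0].
Qed.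

Variables (lH : Rl) (i0 : 'I_m.+1).
Hypothesis lHpos : 0 < lH.
Hypothesis hLH : forall x, rd (x *m cmx L) x <= lH * rd x x.
Hypothesis hi0 : Num.sqrt (w i0) = wmn.

Lemma lower2 : exists2 y : 'rV[C]_(m.+1), y != 0 &
  (sw ^+ 2 + sv ^+ 2 * lH * wmx * wmn) / (lH * wmx ^+ 3 * wmn) * rd y y <=
  rd (y *m @Sigma_tau m.+2 src dst w eps sw sv 0)
     (y *m @Sigma_tau m.+2 src dst w eps sw sv 0).
Proof.
set y : 'rV[C]_(m.+1) := 'e_i0.
have yn0 : y != 0.
  apply/eqP => h; have := rd_e i0; rewrite -/y h rd0l => /eqP.
  by rewrite eq_sym oner_eq0.
exists y => //.
set t := y *m invmx (X 0).
have tX : t *m X 0 = y by rewrite /t mulmxKV // X_unit.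
set u := t *m cmx L.
have huW : u *m cmx Wm = y by rewrite /u -X0E.
have wi0 : w i0 = wmn ^+ 2 by rewrite -hi0 sqr_sqrtr // ltW.
set c := (w i0)^-1.
have Wm1 : cmx Wm *m cmx (diagR (fun l => (w l)^-1)) = 1%:M.
  rewrite -cmxM /Wm /Defs.Wm diagRM.
  apply/matrixP => i j; rewrite !mxE; case: (i == j) => //=.
  by rewrite divff // gt_eqF.
have hu : u = c%:C *: y.
  have -> : u = y *m cmx (diagR (fun l => (w l)^-1)) by rewrite -huW -mulmxA Wm1 mulmx1.
  by rewrite cmx_diagR /y -rowE row_diag_mx mxE.
rewrite Sig_eq mulmxA -/t split_B /y rd_e mulr1 -/y.
have e1 : t *m cmx (L *m Wh) = u *m cmx Wh by rewrite cmxM mulmxA.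
rewrite e1 rd_Wh huW {1}hu rdZr rd_e mulr1.
set p := rd (t *m cmx L) t.
have hq : rd u u = c ^+ 2 by rewrite hu rd_scale2 rd_e mulr1.
have hut : rd (u *m cmx L) t = rd u u by rewrite rd_mulmx ctrmx_cmx L_tr.
have hp : p = rd u t by [].
set d := lH^-1.
have hr := hLH u.
have h0 := L_psd (t + (- d)%:C *: u).
rewrite mulmxDl -scalemxAl -/u rdDl !rdDr !rdZl !rdZr hut -hp hq in h0.
rewrite hq in hr.
have dl : d * lH = 1 by rewrite /d mulVf // gt_eqF.
have dpos : 0 < d by rewrite /d invr_gt0.
have hpq : c ^+ 2 * d <= p.
  have : d ^+ 2 * rd (u *m cmx L) u <= d ^+ 2 * (lH * c ^+ 2).
    by apply: ler_wpM2l => //; exact: sqr_ge0.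
  have -> : d ^+ 2 * (lH * c ^+ 2) = d * c ^+ 2 by rewrite expr2 -mulrA (mulrA d lH) dl mul1r.
  move=> h; nra.
have apos : 0 < wmn := wmnpos.
have bpos : 0 < wmx by apply: lt_le_trans (hwx i0); rewrite sqrtr_gt0.
have ab : wmn <= wmx by rewrite -hi0.
have hs := sqr_ge0 sw; have hv := sqr_ge0 sv.
have eL2 : (sw ^+ 2 + sv ^+ 2 * lH * wmx * wmn) / (lH * wmx ^+ 3 * wmn) =
   sw ^+ 2 * (lH * wmx ^+ 3 * wmn)^-1 + sv ^+ 2 * (wmx ^+ 2)^-1.
  by field; rewrite !gt_eqF.
rewrite eL2; apply: lerD.
  apply: le_trans (ler_wpM2l hs hpq); apply: ler_wpM2l => //.
  have -> : c ^+ 2 * d = (lH * wmn ^+ 4)^-1.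
    by rewrite /c /d wi0; field; rewrite !gt_eqF.
  rewrite lef_pV2 ?posrE ?mulr_gt0 ?exprn_gt0 //.
  rewrite -mulrA; apply: ler_wpM2l; first exact: ltW.
  have e : wmn ^+ 4 = wmn ^+ 3 * wmn by rewrite -exprSr.
  rewrite e; apply: ler_wpM2r; first exact: ltW.
  by rewrite ler_pXn2r // nnegrE ltW.
apply: ler_wpM2l => //; rewrite /c wi0 lef_pV2 ?posrE ?exprn_gt0 //.
by rewrite ler_pXn2r // nnegrE ltW.
Qed.

End Sys.

Lemma sigma_char k p (M : 'M[C]_(k.+1, p)) : exists hi : Rl,
  [/\ sigma_max M = Num.sqrt hi, 0 <= hi,
      forall y, rd (y *m M) (y *m M) <= hi * rd y y &
      exists2 y, y != 0 & rd (y *m M) (y *m M) = hi * rd y y].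
Proof.
set H := M *m ctrmx M.
have hH : ctrmx H = H by rewrite /H ctrmx_mul ctrmxK.
have eH : forall y, rd (y *m H) y = rd (y *m M) (y *m M).
  by move=> y; rewrite /H mulmxA rd_mulmx ctrmxK.
have [lo [hi [_ ehi hr]]] := herm_rayleigh hH.
have hr' : forall y, lo * rd y y <= rd (y *m H) y <= hi * rd y y by [].
have [v hv vn0] := eigenvalueP ehi.
have ev : rd (v *m M) (v *m M) = hi * rd v v by rewrite -eH hv rdZl.
have hi0 : 0 <= hi.
  have := rd_ge0 (v *m M); rewrite ev pmulr_lge0 //; exact: rd_gt0.
exists hi; split => //; last by exists v.
  rewrite /sigma_max; apply/eqP; rewrite eq_le; apply/andP; split.
    apply: ge_sup.
      exists (Num.sqrt hi); split; first exact: sqrtr_ge0.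
      by rewrite sqr_sqrtr.
    move=> s [s0 es].
    have /andP [_ h] := eig_rayleigh hr' es.
    by rewrite -[s in s <= _](ger0_norm s0) -sqrtr_sqr ler_sqrt.
  apply: (ub_le_sup (E := [set s : Rl | 0 <= s /\ eigenvalue H (s ^+ 2)%:C])).
    exists (Num.sqrt hi) => s [s0 es].
    have /andP [_ h] := eig_rayleigh hr' es.
    by rewrite -[s in s <= _](ger0_norm s0) -sqrtr_sqr ler_sqrt.
  by split; [exact: sqrtr_ge0 | rewrite sqr_sqrtr].
by move=> y; rewrite -eH; case/andP: (hr y).
Qed.

Local Close Scope complex_scope.
Local Open Scope classical_set_scope.
Unset Implicit Arguments.

Theorem theorem4 (n : nat) (hn : (2 <= n)%N)
  (src dst : 'I_n.-1 -> 'I_n) (w : 'I_n.-1 -> Rl) (eps : 'I_n -> Rl)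
  (sw sv : Rl) :
  is_oriented_tree src dst ->
  (forall l, 0 < w l) -> (forall i, 0 < eps i) ->
  let lLmin := lambda_min (Les src dst eps) in
  let lLmax := lambda_max (Les src dst eps) in
  let wmax := lambda_max (Whalf w) in
  let wmin := lambda_min (Whalf w) in
  let L1 := (sw ^+ 2 + sv ^+ 2 * lLmin * wmax ^+ 2) / (lLmin * wmax ^+ 4) in
  let L2 := (sw ^+ 2 + sv ^+ 2 * lLmax * wmax * wmin)
            / (lLmax * wmax ^+ 3 * wmin) in
  let U := (sw ^+ 2 + sv ^+ 2 * lLmin * wmin ^+ 2) / (lLmin * wmin ^+ 4) in
  has_ubound (Hinf_set src dst w eps sw sv) /\
  Num.max L1 L2 <= (Hinf_norm src dst w eps sw sv) ^+ 2 <= U.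
Proof.
case: n hn src dst w eps => [|[|m]] // _ src dst w eps tree wpos epspos.
move=> lLmin lLmax wmax wmin L1 L2 U.
have [lL [lH [eL eH lLpos heig hR]]] := L_spec tree epspos.
have hL : forall x, lL * rd x x <= rd (x *m cmx (Les src dst eps)) x.
  by move=> x; case/andP: (hR x).
have hLH : forall x, rd (x *m cmx (Les src dst eps)) x <= lH * rd x x.
  by move=> x; case/andP: (hR x).
have lHpos : 0 < lH.
  have /andP [h1 h2] := hR ('e_ord0); rewrite rd_e !mulr1 in h1 h2.
  exact: lt_le_trans lLpos (le_trans h1 h2).
have [i0 [i1 [ewn ewx hw]]] := diag_spec (fun l => Num.sqrt (w l)).
set wmn := Num.sqrt (w i0) in ewn hw.
set wmx := Num.sqrt (w i1) in ewx hw.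
have wmnpos : 0 < wmn by rewrite sqrtr_gt0.
have hwn : forall l, wmn <= Num.sqrt (w l) by move=> l; case/andP: (hw l).
have hwx : forall l, Num.sqrt (w l) <= wmx by move=> l; case/andP: (hw l).
have e1 : lLmin = lL by [].
have e2 : lLmax = lH by [].
have e3 : wmax = wmx by [].
have e4 : wmin = wmn by [].
rewrite /L1 /L2 /U e1 e2 e3 e4 {L1 L2 U e1 e2 e3 e4 lLmin lLmax wmax wmin}.
set U := (sw ^+ 2 + sv ^+ 2 * lL * wmn ^+ 2) / (lL * wmn ^+ 4).
have hup := upper sw sv wpos epspos lLpos hL wmnpos hwn.
have [l1y l1n l1h] := lower1 sw sv wpos epspos lLpos hL wmnpos hwn hwx heig.
have [l2y l2n l2h] := lower2 sw sv wpos epspos lLpos hL wmnpos hwn hwx lHpos hLH (erefl wmn).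
set L1 := (sw ^+ 2 + sv ^+ 2 * lL * wmx ^+ 2) / (lL * wmx ^+ 4) in l1h *.
set L2 := (sw ^+ 2 + sv ^+ 2 * lH * wmx * wmn) / (lH * wmx ^+ 3 * wmn) in l2h *.
have hsig : forall om, exists hi, sigma_max (Sigma_tau src dst w eps sw sv om) = Num.sqrt hi
    /\ 0 <= hi /\ hi <= U.
  move=> om; have [hi [e h0 _ [y yn0 ey]]] := sigma_char (Sigma_tau src dst w eps sw sv om).
  exists hi; split => //; split => //.
  have p := rd_gt0 yn0.
  by have := hup om y; rewrite ey ler_pM2r.
have [hi0 [e0 h00 hr0 [y0 y0n ey0]]] := sigma_char (Sigma_tau src dst w eps sw sv 0).
have hi0U : hi0 <= U.
  have p := rd_gt0 y0n.
  by have := hup 0 y0; rewrite ey0 ler_pM2r.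
have U0 : 0 <= U := le_trans h00 hi0U.
have hi0L1 : L1 <= hi0.
  have p := rd_gt0 l1n.
  by have := le_trans l1h (hr0 l1y); rewrite ler_pM2r.
have hi0L2 : L2 <= hi0.
  have p := rd_gt0 l2n.
  by have := le_trans l2h (hr0 l2y); rewrite ler_pM2r.
have ub : forall z, Hinf_set src dst w eps sw sv z -> z <= Num.sqrt U.
  move=> z [om _ <-]; have [hi [-> [_ hiU]]] := hsig om.
  by rewrite (ler_sqrt hi U0).
have hub : has_ubound (Hinf_set src dst w eps sw sv) by exists (Num.sqrt U).
have mem0 : Hinf_set src dst w eps sw sv (Num.sqrt hi0) by exists 0.
have Hle : Hinf_norm src dst w eps sw sv <= Num.sqrt U.
  by apply: ge_sup; [exists (Num.sqrt hi0) | exact: ub].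
have Hge : Num.sqrt hi0 <= Hinf_norm src dst w eps sw sv.
  exact: (ub_le_sup hub).
have s0 := sqrtr_ge0 hi0.
have sU := sqr_sqrtr U0.
have sh := sqr_sqrtr h00.
split => //; apply/andP; split.
  rewrite ge_max; apply/andP; split; nra.
nra.
Qed.
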